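(* Let $d,n\ge 1$, let $\boldsymbol{a}_1,\ldots,\boldsymbol{a}_n\in\mathbf{R}^d$, let $w_1,\ldots,w_n>0$, fix $\varepsilon>0$ and $1\le p\le 2$. Define $\Phi(\boldsymbol{x})=\sum_{j=1}^n w_j\,(\lVert\boldsymbol{x}-\boldsymbol{a}_j\rVert^2+\varepsilon)^{p/2}$ and let $\boldsymbol{x}^\star$ be its unique global minimizer. Let $\boldsymbol{x}^{(0)}\in\mathbf{R}^d$ be arbitrary and define, for $t\ge 0$, $$\mu_j^{(t)}=w_j\,(\lVert\boldsymbol{x}^{(t)}-\boldsymbol{a}_j\rVert^2+\varepsilon)^{p/2-1},\qquad \boldsymbol{x}^{(t+1)}=\frac{\sum_j\mu_j^{(t)}\boldsymbol{a}_j}{\sum_j\mu_j^{(t)}}.$$ Then there exist a constant $\nu<1$ and $T\ge 0$ such that for all $t\ge T$, $$\Phi(\boldsymbol{x}^{(t+1)})-\Phi(\boldsymbol{x}^\star)\le\nu\big(\Phi(\boldsymbol{x}^{(t)})-\Phi(\boldsymbol{x}^\star)\big).$$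
   Context: $\lVert\cdot\rVert$ is the Euclidean norm on $\mathbf{R}^d$. *)

(* Defs.v *)
From HB Require Import structures.
From mathcomp Require Import all_boot all_order all_algebra.
From mathcomp Require Import all_classical all_reals all_analysis.
Set Implicit Arguments. Unset Strict Implicit. Unset Printing Implicit Defensive.
Import Order.TTheory GRing.Theory Num.Theory.
Local Open Scope ring_scope.

Definition enorm (R : realType) (d : nat) (x : 'rV[R]_d) : R :=
  Num.sqrt (\sum_(i < d) x ord0 i ^+ 2).

Definition Phi (R : realType) (d n : nat) (a : 'I_n -> 'rV[R]_d) (w : 'I_n -> R)
  (eps p : R) (x : 'rV[R]_d) : R :=
  \sum_(j < n) w j * (enorm (x - a j) ^+ 2 + eps) `^ (p / 2).

Definition mu (R : realType) (d n : nat) (a : 'I_n -> 'rV[R]_d) (w : 'I_n -> R)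
  (eps p : R) (x : 'rV[R]_d) (j : 'I_n) : R :=
  w j * (enorm (x - a j) ^+ 2 + eps) `^ (p / 2 - 1).

Definition irls_step (R : realType) (d n : nat) (a : 'I_n -> 'rV[R]_d) (w : 'I_n -> R)
  (eps p : R) (x : 'rV[R]_d) : 'rV[R]_d :=
  (\sum_(j < n) mu a w eps p x j)^-1 *: \sum_(j < n) (mu a w eps p x j *: a j).

Fixpoint irls_iter (R : realType) (d n : nat) (a : 'I_n -> 'rV[R]_d) (w : 'I_n -> R)
  (eps p : R) (x0 : 'rV[R]_d) (t : nat) : 'rV[R]_d :=
  match t with
  | 0 => x0
  | t'.+1 => irls_step a w eps p (irls_iter a w eps p x0 t')
  end.

(* Main.v *)
Require Import Defs.
From HB Require Import structures.
From mathcomp Require Import all_boot all_order all_algebra.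
From mathcomp Require Import all_classical all_reals all_analysis.
From mathcomp Require Import ring lra.
Import Order.TTheory GRing.Theory Num.Theory.
Local Open Scope ring_scope.
Section S.
Variable R : realType.
Implicit Types (r S T a b : R).

Lemma amgm r a b : 0 < r < 1 -> 0 <= a -> 0 <= b ->
  a `^ r * b `^ (1 - r) <= r * a + (1 - r) * b.
Proof.
move=> /andP[r0 r1] a0 b0.
have r1' : 0 < 1 - r by rewrite subr_gt0.
have := @conjugate_powR R (a `^ r) (b `^ (1 - r)) r^-1 (1 - r)^-1
  (powR_ge0 _ _) (powR_ge0 _ _).
rewrite !invr_gt0 !invrK r0 r1' addrC subrK => /(_ isT isT erefl).
rewrite -!powRrM !mulfV ?gt_eqF // !powRr1 //.
by rewrite (mulrC a) (mulrC b).
Qed.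

Lemma conc r S T : 0 < r <= 1 -> 0 < S -> 0 <= T ->
  T `^ r <= S `^ r + r * S `^ (r - 1) * (T - S).
Proof.
move=> /andP[r0]; rewrite le_eqVlt => /predU1P[->|r1] S0 T0.
  by rewrite subrr powRr0 (powRr1 (ltW S0)) powRr1 //; lra.
have := @amgm r T S _ T0 (ltW S0).
rewrite r0 r1 => /(_ isT).
have Sp : 0 < S `^ (r - 1) by rewrite powR_gt0.
have P : S `^ (1 - r) * S `^ (r - 1) = 1.
  have e0 : 1 - r + (r - 1) = 0 by ring.
  by rewrite -powRD e0 ?powRr0 // (gt_eqF S0) implybT.
rewrite -(ler_pM2r Sp) => h.
move: h; rewrite -(mulrA (T `^ r)) P mulr1.
have e : S * S `^ (r - 1) = S `^ r by rewrite mulr_powRB1 // ltW.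
move=> h; apply: (le_trans h).
rewrite mulrDl -(mulrA (1 - r)) e.
suff: r * T * S `^ (r - 1) + (1 - r) * S `^ r = S `^ r + r * S `^ (r - 1) * (T - S) by move->.
rewrite -e; ring.
Qed.

Lemma conv r S T : 1 <= r -> 0 < S -> 0 <= T ->
  S `^ r + r * S `^ (r - 1) * (T - S) <= T `^ r.
Proof.
move=> r1 S0 T0.
have r0 : 0 < r by apply: lt_le_trans r1.
have ri : 0 < r^-1 <= 1 by rewrite invr_gt0 r0 /= invr_le1 // ?unitfE ?gt_eqF.
have Sr : 0 < S `^ r by rewrite powR_gt0.
have := @conc r^-1 (S `^ r) (T `^ r) ri Sr (powR_ge0 _ _).
rewrite -!powRrM !mulfV ?gt_eqF // (powRr1 T0) (powRr1 (ltW S0)).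
have -> : r * (r^-1 - 1) = 1 - r by rewrite mulrBr mulfV ?gt_eqF // mulr1.
move=> h.
have Sp : 0 < S `^ (r - 1) by rewrite powR_gt0.
have P : S `^ (r - 1) * S `^ (1 - r) = 1.
  have e0 : r - 1 + (1 - r) = 0 by ring.
  by rewrite -powRD e0 ?powRr0 // (gt_eqF S0) implybT.
have : r * S `^ (r - 1) * (T - S) <= r * S `^ (r - 1) * (r^-1 * S `^ (1 - r) * (T `^ r - S `^ r)).
  by rewrite ler_pM2l ?mulr_gt0 // lerBlDl.
have -> : r * S `^ (r - 1) * (r^-1 * S `^ (1 - r) * (T `^ r - S `^ r)) = (r * r^-1) * (S `^ (r - 1) * S `^ (1 - r)) * (T `^ r - S `^ r) by ring.
by rewrite P mulfV ?gt_eqF // !mul1r lerBrDl.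
Qed.

Lemma negmono (e S K : R) : e <= 0 -> 0 < S -> S <= K -> K `^ e <= S `^ e.
Proof.
move=> e0 S0 SK.
have K0 : 0 < K by apply: lt_le_trans SK.
have he : 0 <= - e by rewrite oppr_ge0.
have := ge0_ler_powR he (x:=S) (y:=K); rewrite !nnegrE ltW // ltW // => /(_ isT isT SK).
rewrite !powRN lef_pV2 // posrE powR_gt0 //.
Qed.

Lemma sc_alg (gu gv nu nv B eps : R) : 0 < gu -> 0 < gv -> 0 < eps ->
  gu ^+ 2 = nu + eps -> gv ^+ 2 = nv + eps -> B ^+ 2 <= nu * nv ->
  0 <= nu + nv - 2 * B ->
  0 <= gu * gv - B - eps /\ eps * (nu + nv - 2 * B) <= 2 * (gu * gv) * (gu * gv - B - eps).
Proof.
move=> gu0 gv0 e0 hu hv cs D0.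
set P := gu * gv.
have P0 : 0 < P by rewrite mulr_gt0.
have key : P ^+ 2 - (B + eps) ^+ 2 = nu * nv - B ^+ 2 + eps * (nu + nv - 2 * B).
  by rewrite /P exprMn hu hv; ring.
have k2 : eps * (nu + nv - 2 * B) <= P ^+ 2 - (B + eps) ^+ 2.
  rewrite key; lra.
have E0 : 0 <= P - B - eps.
  have k3 : 0 <= (P - (B + eps)) * (P + (B + eps)).
    have -> : (P - (B + eps)) * (P + (B + eps)) = P ^+ 2 - (B + eps) ^+ 2 by ring.
    have : 0 <= eps * (nu + nv - 2 * B) by rewrite mulr_ge0 // ltW.
    lra.
  nra.
split => //.
have : (P - B - eps) * (P + (B + eps)) <= 2 * P * (P - B - eps) by nra.
have -> : (P - B - eps) * (P + (B + eps)) = P ^+ 2 - (B + eps) ^+ 2 by ring.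
lra.
Qed.

Lemma sq_powR (g q : R) : 0 <= g -> (g ^+ 2) `^ q = g `^ (2 * q).
Proof. by move=> g0; rewrite -powR_mulrn // -powRrM. Qed.

Lemma sc_scalar (nu nv B eps K q : R) : 0 < eps -> 2^-1 <= q -> q <= 1 ->
  0 <= nu -> 0 <= nv -> B ^+ 2 <= nu * nv -> 0 <= nu + nv - 2 * B ->
  nu + eps <= K -> nv + eps <= K ->
  (nu + eps) `^ q + 2 * q * (nu + eps) `^ (q - 1) * (B - nu)
    + q * K `^ (q - 1) * eps / K * (nu + nv - 2 * B) <= (nv + eps) `^ q.
Proof.
move=> e0 q12 q1 nu0 nv0 cs D0 hK1 hK2.
have q0 : 0 < q by apply: lt_le_trans q12; rewrite invr_gt0.
have K0 : 0 < K by lra.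
set gu := Num.sqrt (nu + eps); set gv := Num.sqrt (nv + eps).
have gu0 : 0 < gu by rewrite sqrtr_gt0; lra.
have gv0 : 0 < gv by rewrite sqrtr_gt0; lra.
have hu : gu ^+ 2 = nu + eps by rewrite sqr_sqrtr //; lra.
have hv : gv ^+ 2 = nv + eps by rewrite sqr_sqrtr //; lra.
have r1 : 1 <= 2 * q by lra.
have cv := @conv (2 * q) gu gv r1 gu0 (ltW gv0).
rewrite -(@sq_powR gu q (ltW gu0)) -(@sq_powR gv q (ltW gv0)) hu hv in cv.
have ga : gu `^ (2 * q - 1) = (nu + eps) `^ (q - 1) * gu.
  suff : gu * gu `^ (2 * q - 1) = gu * ((nu + eps) `^ (q - 1) * gu).
    by move/(mulfI (negbT (gt_eqF gu0))).
  rewrite mulr_powRB1 ?ltW ?mulr_gt0 // -(@sq_powR gu q (ltW gu0)) hu.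
  have -> : gu * ((nu + eps) `^ (q - 1) * gu) = gu ^+ 2 * (nu + eps) `^ (q - 1) by ring.
  rewrite hu mulr_powRB1 //; lra.
rewrite ga in cv.
have [E0 hE] := @sc_alg gu gv nu nv B eps gu0 gv0 e0 hu hv cs D0.
have PK : gu * gv <= K.
  have P0 : 0 <= gu * gv by rewrite mulr_ge0 ?ltW.
  have : (gu * gv) ^+ 2 <= K ^+ 2 by rewrite exprMn hu hv; nra.
  nra.
have hb := @negmono (q - 1) (nu + eps) K ltac:(lra) ltac:(lra) hK1.
have b0 : 0 < K `^ (q - 1) by rewrite powR_gt0.
set al := (nu + eps) `^ (q - 1) in hb cv *.
set be := K `^ (q - 1) in hb b0 *.
set D := nu + nv - 2 * B in hE D0 *.
set E := gu * gv - B - eps in E0 hE.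
have h1 : be * eps / K * D <= 2 * be * E.
  rewrite mulrAC ler_pdivrMr //.
  have : eps * D <= 2 * K * E by nra.
  nra.
apply: le_trans cv.
have -> : q * be * eps / K * D = q * (be * eps / K * D) by rewrite !mulrA.
have -> : 2 * q * (al * gu) * (gv - gu) = 2 * q * al * (gu * (gv - gu)) by ring.
have -> : gu * (gv - gu) = B - nu + E by rewrite /E mulrBr -expr2 hu; ring.
have : be * E <= al * E by rewrite ler_wpM2r.
set c := be * eps / K * D in h1 *.
nra.
Qed.
End S.
Section V.
Variable R : realType.

Definition ssf (d : nat) (f : 'I_d -> R) := \sum_(i < d) f i ^+ 2.
Definition dtf (d : nat) (f g : 'I_d -> R) := \sum_(i < d) f i * g i.
Arguments ssf {d} f.
Arguments dtf {d} f g.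

Lemma ssf_ge0 {d} (f : 'I_d -> R) : 0 <= ssf f.
Proof. by apply: sumr_ge0 => i _; rewrite sqr_ge0. Qed.

Lemma ssf_quad {d} (f g : 'I_d -> R) t :
  ssf (fun i => f i - t * g i) = ssf f - 2 * t * dtf f g + t ^+ 2 * ssf g.
Proof.
rewrite /ssf /dtf !mulr_sumr -sumrB -big_split /=; apply: eq_bigr => i _; ring.
Qed.

Lemma CS {d} (f g : 'I_d -> R) : dtf f g ^+ 2 <= ssf f * ssf g.
Proof.
have Q t : 0 <= ssf f - 2 * t * dtf f g + t ^+ 2 * ssf g by rewrite -ssf_quad ssf_ge0.
have A0 := ssf_ge0 f; have C0 := ssf_ge0 g.
set A := ssf f in Q A0 *; set C := ssf g in Q C0 *; set B := dtf f g in Q *.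
have [C0'|Cp] := eqVneq C 0.
  rewrite C0' mulr0.
  have [B0|Bn] := eqVneq B 0; first by rewrite B0 expr0n.
  have := Q ((A + 1) / (2 * B)); rewrite C0' mulr0 addr0.
  have -> : 2 * ((A + 1) / (2 * B)) * B = A + 1.
    by field; rewrite Bn.
  lra.
have Cg : 0 < C by rewrite lt0r Cp.
have := Q (B / C).
have -> : A - 2 * (B / C) * B + (B / C) ^+ 2 * C = (A * C - B ^+ 2) / C.
  by field; rewrite Cp.
rewrite pmulr_lge0 ?invr_gt0 // subr_ge0 mulrC //.
Qed.

Lemma wexp {n} (m b : 'I_n -> R) z :
  \sum_j m j * (z - b j) ^+ 2 =
  z ^+ 2 * \sum_j m j - 2 * z * \sum_j m j * b j + \sum_j m j * b j ^+ 2.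
Proof.
rewrite !mulr_sumr -sumrB -big_split /=; apply: eq_bigr => i _; ring.
Qed.

Lemma wmean {n} (m b : 'I_n -> R) y : (forall j, 0 <= m j) -> 0 < \sum_j m j ->
  \sum_j m j * ((\sum_j m j)^-1 * \sum_k m k * b k - b j) ^+ 2
    <= \sum_j m j * (y - b j) ^+ 2.
Proof.
move=> m0 M0; rewrite !wexp.
set M := \sum_j m j in M0 *; set A := \sum_j m j * b j; set Q := \sum_j m j * b j ^+ 2.
set c := M^-1 * A.
have hA : A = c * M by rewrite /c mulrAC mulVf ?mul1r // gt_eqF.
rewrite hA.
have : 0 <= M * (y - c) ^+ 2 by rewrite mulr_ge0 ?sqr_ge0 ?ltW.
have -> : M * (y - c) ^+ 2 = y ^+ 2 * M - 2 * y * (c * M) - (c ^+ 2 * M - 2 * c * (c * M)) by ring.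
lra.
Qed.
End V.
Arguments ssf {R d} f.
Arguments dtf {R d} f g.

Section P.
Variables (R : realType) (d n : nat) (a : 'I_n -> 'rV[R]_d) (w : 'I_n -> R) (eps p : R).
Hypothesis hw : forall j, 0 < w j.
Hypothesis heps : 0 < eps.
Hypothesis hp1 : 1 <= p.
Hypothesis hp2 : p <= 2.
Hypothesis hn : (0 < n)%N.

Lemma sum_pos (F : 'I_n -> R) : (forall j, 0 < F j) -> 0 < \sum_j F j.
Proof.
move=> F0; rewrite (bigD1 (Ordinal hn)) //=.
by rewrite ltr_pwDl ?F0 // sumr_ge0 // => j _; rewrite ltW.
Qed.

Let q := p / 2.
Definition Sf (v : 'I_d -> R) j := ssf (fun i => v i - a j ord0 i).
Definition S (x : 'rV[R]_d) j := Sf (fun i => x ord0 i) j + eps.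

Lemma enormE (x : 'rV[R]_d) j : enorm (x - a j) ^+ 2 + eps = S x j.
Proof.
rewrite /enorm sqr_sqrtr; last by apply: sumr_ge0 => i _; rewrite sqr_ge0.
by rewrite /S /Sf /ssf; congr (_ + _); apply: eq_bigr => i _; rewrite !mxE.
Qed.

Lemma PhiE x : Phi a w eps p x = \sum_j w j * S x j `^ q.
Proof. by apply: eq_bigr => j _; rewrite enormE. Qed.

Lemma muE x j : mu a w eps p x j = w j * S x j `^ (q - 1).
Proof. by rewrite /mu enormE. Qed.

Lemma S_ge x j : eps <= S x j.
Proof. by rewrite /S lerDr /Sf ssf_ge0. Qed.

Lemma S_gt0 x j : 0 < S x j.
Proof. exact: lt_le_trans heps (S_ge x j). Qed.

Lemma mu_gt0 x j : 0 < mu a w eps p x j.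
Proof. by rewrite muE mulr_gt0 ?powR_gt0 ?S_gt0. Qed.

Lemma stepE x i : irls_step a w eps p x ord0 i =
  (\sum_j mu a w eps p x j)^-1 * \sum_j mu a w eps p x j * a j ord0 i.
Proof.
rewrite /irls_step mxE summxE; congr (_ * _); apply: eq_bigr => j _; by rewrite mxE.
Qed.

Definition Bp (x z : 'rV[R]_d) j := \sum_i (x ord0 i - a j ord0 i) * (z ord0 i - x ord0 i).
Definition Dz (x z : 'rV[R]_d) := \sum_(i < d) (z ord0 i - x ord0 i) ^+ 2.

Lemma q_bounds : 2^-1 <= q /\ q <= 1.
Proof.
rewrite /q; split; last by rewrite ler_pdivrMr // mul1r.
by rewrite -[X in X <= _](mul1r 2^-1) ler_wpM2r // invr_ge0 ler0n.
Qed.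

Lemma Sf_diff (x z : 'rV[R]_d) th j :
  Sf (fun i => x ord0 i + th * (z ord0 i - x ord0 i)) j - Sf (fun i => x ord0 i) j
  = 2 * th * Bp x z j + th ^+ 2 * Dz x z.
Proof.
rewrite /Sf /ssf /Bp /Dz !mulr_sumr -sumrB -big_split /=.
by apply: eq_bigr => i _; ring.
Qed.

Lemma major (x z : 'rV[R]_d) th :
  Phi a w eps p (irls_step a w eps p x) <= Phi a w eps p x +
   q * (2 * th * \sum_j mu a w eps p x j * Bp x z j
        + th ^+ 2 * (\sum_j mu a w eps p x j) * Dz x z).
Proof.
set xp := irls_step a w eps p x.
set m := mu a w eps p x.
have [q12 q1] := q_bounds.
have q0 : 0 < q by apply: lt_le_trans q12; rewrite invr_gt0.
have sa : Phi a w eps p xp <= Phi a w eps p x + q * \sum_j m j * (S xp j - S x j).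
  rewrite !PhiE mulr_sumr -big_split /=; apply: ler_sum => j _.
  have := @conc R q (S x j) (S xp j) _ (S_gt0 x j) (ltW (S_gt0 xp j)).
  rewrite q0 q1 => /(_ isT) h.
  rewrite /m muE.
  have -> : w j * S x j `^ q + q * (w j * S x j `^ (q - 1) * (S xp j - S x j))
    = w j * (S x j `^ q + q * S x j `^ (q - 1) * (S xp j - S x j)) by ring.
  by rewrite ler_pM2l.
apply: le_trans sa _; rewrite lerD2l ler_pM2l //.
set y := fun i => x ord0 i + th * (z ord0 i - x ord0 i).
have e1 : forall v : 'I_d -> R, \sum_j m j * (Sf v j + eps - S x j)
   = \sum_j m j * Sf v j - \sum_j m j * Sf (fun i => x ord0 i) j.
  move=> v; rewrite -sumrB; apply: eq_bigr => j _; rewrite /S; ring.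
have -> : \sum_j m j * (S xp j - S x j) = \sum_j m j * (Sf (fun i => xp ord0 i) j + eps - S x j) by [].
have -> : 2 * th * \sum_j m j * Bp x z j + th ^+ 2 * (\sum_j m j) * Dz x z
   = \sum_j m j * (Sf y j + eps - S x j).
  rewrite e1 -sumrB -(mulrA (th ^+ 2)) mulr_suml !mulr_sumr -big_split /=; apply: eq_bigr => j _.
  rewrite -mulrBr Sf_diff; ring.
rewrite !e1 lerD2r /Sf /ssf.
under eq_bigr => j _ do rewrite mulr_sumr.
under [X in _ <= X]eq_bigr => j _ do rewrite mulr_sumr.
rewrite exchange_big [X in _ <= X]exchange_big /=.
apply: ler_sum => i _.
rewrite /xp stepE.
apply: wmean => [j|]; first exact: ltW (mu_gt0 _ _).
by apply: sum_pos => j; apply: mu_gt0.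
Qed.

Lemma sconv (x z : 'rV[R]_d) K : (forall j, S x j <= K) -> (forall j, S z j <= K) ->
  Phi a w eps p x + 2 * q * \sum_j mu a w eps p x j * Bp x z j
   + (q * K `^ (q - 1) * eps / K) * (\sum_j w j) * Dz x z <= Phi a w eps p z.
Proof.
move=> hK1 hK2.
have [q12 q1] := q_bounds.
set c := q * K `^ (q - 1) * eps / K.
have hj : forall j, w j * S x j `^ q + 2 * q * (mu a w eps p x j * Bp x z j)
   + c * (w j * Dz x z) <= w j * S z j `^ q.
  move=> j.
  set u := fun i => x ord0 i - a j ord0 i.
  set v := fun i => z ord0 i - a j ord0 i.
  have hB : dtf u v - ssf u = Bp x z j.
    by rewrite /dtf /ssf /Bp -sumrB; apply: eq_bigr => i _; rewrite /u /v; ring.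
  have hD : ssf u + ssf v - 2 * dtf u v = Dz x z.
    rewrite /dtf /ssf /Dz mulr_sumr -big_split -sumrB /=.
    by apply: eq_bigr => i _; rewrite /u /v; ring.
  have D0 : 0 <= ssf u + ssf v - 2 * dtf u v by rewrite hD sumr_ge0 // => i _; rewrite sqr_ge0.
  have := @sc_scalar R (ssf u) (ssf v) (dtf u v) eps K q heps q12 q1 (ssf_ge0 R u) (ssf_ge0 R v)
    (CS R u v) D0 (hK1 j) (hK2 j).
  rewrite hB hD -/c => h.
  rewrite muE.
  have -> : w j * S x j `^ q + 2 * q * (w j * S x j `^ (q - 1) * Bp x z j) + c * (w j * Dz x z)
    = w j * (S x j `^ q + 2 * q * S x j `^ (q - 1) * Bp x z j + c * Dz x z) by ring.
  by rewrite ler_pM2l.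
have := @ler_sum _ _ (index_enum (ordinal n)) xpredT _ _ (fun j _ => hj j).
rewrite !big_split /= -mulr_sumr -mulr_sumr -mulr_suml -!PhiE.
by rewrite mulrA.
Qed.
End P.

Lemma term_le (R : realType) (n : nat) (F : 'I_n -> R) j :
  (forall k, 0 <= F k) -> F j <= \sum_k F k.
Proof.
move=> F0; rewrite (bigD1 j) //= lerDl sumr_ge0 // => k _; exact: F0.
Qed.

Lemma final_comb (R : realType) (Pp Px Ps th A B C : R) : 0 <= th ->
  Pp <= Px + (th * A + B) -> Px + A + C <= Ps -> B <= th * C ->
  Pp - Ps <= (1 - th) * (Px - Ps).
Proof.
move=> t0 h1 h2 h3.
have h4 : th * A <= th * (Ps - Px - C) by apply: ler_wpM2l => //; lra.
lra.
Qed.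

Lemma lt1_aux (R : realType) (th : R) : 0 < th -> 1 - th < 1.
Proof. move=> h; lra. Qed.

Lemma le_aux (R : realType) (a b : R) : 0 < a -> b <= 1 * (a + b).
Proof. move=> h; lra. Qed.

Lemma le_aux2 (R : realType) (x s e : R) : x <= s -> 0 < e -> x <= e + s.
Proof. move=> h1 h2; lra. Qed.

Theorem proposition6 (R : realType) (d n : nat) (hd : (1 <= d)%N) (hn : (1 <= n)%N)
  (a : 'I_n -> 'rV[R]_d) (w : 'I_n -> R) (hw : forall j, 0 < w j)
  (eps p : R) (heps : 0 < eps) (hp1 : 1 <= p) (hp2 : p <= 2)
  (xstar : 'rV[R]_d)
  (hmin : forall x : 'rV[R]_d, Phi a w eps p xstar <= Phi a w eps p x)
  (huniq : forall x : 'rV[R]_d,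
     (forall y : 'rV[R]_d, Phi a w eps p x <= Phi a w eps p y) -> x = xstar)
  (x0 : 'rV[R]_d) :
  exists nu : R, nu < 1 /\ exists T : nat, forall t : nat, (T <= t)%N ->
    Phi a w eps p (irls_iter a w eps p x0 t.+1) - Phi a w eps p xstar
    <= nu * (Phi a w eps p (irls_iter a w eps p x0 t) - Phi a w eps p xstar).
Proof.
have hn' : (0 < n)%N by [].
have [q12 q1] := @q_bounds R p hp1 hp2.
set q := p / 2 in q12 q1 *.
have q0 : 0 < q by apply: lt_le_trans q12; rewrite invr_gt0.
set P := Phi a w eps p.
have desc x : P (irls_step a w eps p x) <= P x.
  have := major R d n a w eps p hw heps hp1 hp2 hn' x x 0.
  by rewrite !mulr0 !mul0r expr0n /= !mul0r add0r mulr0 addr0.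
have iterb t : P (irls_iter a w eps p x0 t) <= P x0.
  elim: t => [|t IH] //=; exact: le_trans (desc _) IH.
set P0 := P x0.
have Pw x j : P x <= P0 -> w j * S R d n a eps x j `^ q <= P0.
  move=> hx; apply: le_trans hx; rewrite /P PhiE; apply: (@term_le R n (fun k => w k * S R d n a eps x k `^ q) j) => k.
  by rewrite mulr_ge0 ?powR_ge0 ?ltW.
set K := eps + \sum_k (P0 / w k) `^ (q^-1).
have Kb x j : P x <= P0 -> S R d n a eps x j <= K.
  move=> hx; have h := Pw x j hx.
  have wj := hw j.
  have hq : S R d n a eps x j `^ q <= P0 / w j by rewrite ler_pdivlMr // mulrC.
  have Sge := S_gt0 R d n a eps heps x j.
  have -> : S R d n a eps x j = (S R d n a eps x j `^ q) `^ (q^-1).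
    by rewrite -powRrM mulfV ?gt_eqF // powRr1 // ltW.
  have P00 : 0 <= P0 by apply: le_trans h; rewrite mulr_ge0 ?powR_ge0 ?ltW.
  have qi : 0 <= q^-1 by rewrite invr_ge0 ltW.
  apply: (@le_trans _ _ ((P0 / w j) `^ (q^-1))).
    apply: (ge0_ler_powR qi) => //; rewrite nnegrE ?powR_ge0 //.
    by rewrite divr_ge0 // ltW.
  have := @term_le R n (fun k => (P0 / w k) `^ (q^-1)) j (fun k => powR_ge0 _ _).
  by rewrite /K /= => hh; exact: le_aux2 hh heps.
have K0 : 0 < K.
  rewrite /K ltr_pwDl // sumr_ge0 // => k _; exact: powR_ge0.
set c := q * K `^ (q - 1) * eps / K.
have c0 : 0 < c.
  rewrite /c; apply: divr_gt0 => //; apply: mulr_gt0 => //; apply: mulr_gt0 => //; exact: powR_gt0.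
set W := \sum_j w j.
have W0 : 0 < W by apply: (@sum_pos R n hn') => j.
set Mub := \sum_j w j * eps `^ (q - 1).
have Mub0 : 0 < Mub by apply: (@sum_pos R n hn') => j; rewrite mulr_gt0 ?powR_gt0.
have Mb x : \sum_j mu a w eps p x j <= Mub.
  apply: ler_sum => j _; rewrite muE ler_pM2l //.
  apply: (@negmono R (q - 1) eps (S R d n a eps x j)); [by rewrite subr_le0 | exact: heps | exact: S_ge].
set th := c * W / (c * W + q * Mub).
have den0 : 0 < c * W + q * Mub by apply: addr_gt0; apply: mulr_gt0.
have th0 : 0 < th by rewrite /th; apply: divr_gt0 => //; apply: mulr_gt0.
exists (1 - th); split; first exact: lt1_aux.
exists 0%N => t _.
set x := irls_iter a w eps p x0 t.
have hx : P x <= P0 := iterb t.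
have hs : P xstar <= P0 := hmin x0.
have hmaj := major R d n a w eps p hw heps hp1 hp2 hn' x xstar th.
have hsc := sconv R d n a w eps p hw heps hp1 hp2 x xstar K (Kb x ^~ hx) (Kb xstar ^~ hs).
rewrite -/c -/W -/q in hsc.
rewrite -/q in hmaj.
have -> : irls_iter a w eps p x0 t.+1 = irls_step a w eps p x by [].
rewrite -/P in hmaj hsc *.
set G := \sum_j mu a w eps p x j * Bp R d n a x xstar j in hmaj hsc.
set M := \sum_j mu a w eps p x j in hmaj.
set D := Dz R d x xstar in hmaj hsc.
have D0 : 0 <= D by rewrite /D /Dz sumr_ge0 // => i _; rewrite sqr_ge0.
have hM := Mb x; rewrite -/M in hM.
have h2 : q * th * M <= c * W.
  apply: (@le_trans _ _ (q * th * Mub)); first by rewrite ler_wpM2l // mulr_ge0 ?ltW.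
  have -> : q * th * Mub = c * W * (q * Mub / (c * W + q * Mub)) by rewrite /th; ring.
  rewrite ger_pMr; last by apply: mulr_gt0.
  by rewrite ler_pdivrMr //; apply: le_aux; apply: mulr_gt0.
have h3 : th * D * (q * th * M) <= th * D * (c * W).
  by apply: ler_wpM2l => //; apply: mulr_ge0 => //; exact: ltW.
have e1 : q * (2 * th * G + th ^+ 2 * M * D) = th * (2 * q * G) + th * D * (q * th * M) by ring.
rewrite e1 in hmaj.
have e2 : th * D * (c * W) = th * (c * W * D) by ring.
rewrite e2 in h3.
exact: (@final_comb R _ _ _ _ _ _ _ (ltW th0) hmaj hsc h3).
Qed.
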